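(* Let $\ell,r$ be integers with $r\ge 2$ and $\ell\ge 2r$, and let $m=m_{r,\ell}$. Define $H(q)=(m-q)\,(q)_{r-1}$ for integers $q\in[0,m]$. Then $H(q)<H(m-1)$ for all integers $q\in[0,m]\setminus\{m-1\}$.
   Context: For an integer $z$ and positive integer $k$, $(z)_k=z(z-1)\cdots(z-k+1)$ if $z>k-1$ and $(z)_k=0$ otherwise. $m_{r,\ell}$ is the unique integer $k\ge r$ maximizing $f(k)=\frac{(k-1)(k-2)\cdots(k-r+1)}{k^{\ell-1}}$ over all integers $k\ge r$. *)

(* Defs.v *)
From mathcomp Require Import all_boot all_order all_algebra.
Set Implicit Arguments. Unset Strict Implicit. Unset Printing Implicit Defensive.
Import Order.TTheory GRing.Theory Num.Theory.

Definition falling (z k : nat) : nat := z ^_ k.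

Definition fmax (r l k : nat) : rat :=
  ((\prod_(1 <= i < r) ((k%:R : rat) - i%:R)) / (k%:R ^+ (l.-1)))%R.

(* m is the unique integer k >= r maximizing f over all integers k >= r,
   i.e. m = m_{r,l}. *)
Definition is_m (r l m : nat) : Prop :=
  (r <= m)%N /\ forall k : nat, (r <= k)%N -> k <> m -> (fmax r l k < fmax r l m)%R.

Definition Hfun (r m q : nat) : nat := (m - q) * falling q (r.-1).

(* Main.v *)
Require Import Defs.
From mathcomp Require Import all_boot all_order all_algebra.
From mathcomp Require Import zify ring lra.
Import Order.TTheory GRing.Theory Num.Theory.

Lemma bern (k L : nat) : k ^ L.+1 + L * k ^ L <= k * (k.+1) ^ L.
Proof.
elim: L => [|L IH]; first by rewrite expn0 muln1 /=; lia.
rewrite !expnS.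
have h1 : k * (k.+1 * k.+1 ^ L) = k.+1 * (k * k.+1 ^ L) by rewrite mulnCA.
rewrite h1.
have : k.+1 * (k ^ L.+1 + L * k ^ L) <= k.+1 * (k * k.+1 ^ L) by rewrite leq_mul2l IH orbT.
rewrite !expnS. nia.
Qed.

Lemma keyn (r k L : nat) : 2 <= r -> (2 * r).-2 <= k -> (2 * r).-1 <= L ->
  k * k ^ L.+1 < k * ((k - r.-1) * k.+1 ^ L).
Proof.
move=> hr hk hL.
have B := bern k L.
have kp : 0 < k by lia.
have X : 0 < k ^ L by rewrite expn_gt0 kp.
set Y := k * k.+1 ^ L in B.
have e : k * ((k - r.-1) * k.+1 ^ L) = (k - r.-1) * Y by rewrite /Y; ring.
rewrite e expnS.
set Z := k ^ L in B X *.
rewrite expnS -/Z in B.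
have h2 : L * (k - r.-1) >= (2 * r).-1 * (k - r.-1) by rewrite leq_mul2r hL orbT.
have h3 : (2*r).-1 * (k - r.-1) > r.-1 * k by nia.
have h4 : (k - r.-1) * Y >= (k - r.-1) * (k * Z + L * Z) by rewrite leq_mul2l B orbT.
nia.
Qed.

Lemma m_le (r l m : nat) : 2 <= r -> 2 * r <= l -> is_m r l m -> m <= (2 * r).-2.
Proof.
move=> hr hl [hm hmax].
rewrite leqNgt; apply/negP => hgt.
set k := m.-1.
have em : m = k.+1 by rewrite /k; lia.
have hk : (2 * r).-2 <= k by lia.
have rk : r <= k by lia.
have := hmax k rk (ltac:(lia)).
rewrite em /fmax.
set L := l.-1.
have hL : (2 * r).-1 <= L by rewrite /L; lia.
have r1 : r = (r.-1).+1 by lia.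
set Q := (\prod_(1 <= i < r.-1) ((k%:R : rat) - i%:R))%R.
have Qp : (0 < Q)%R.
  rewrite /Q big_nat_cond; apply: prodr_gt0 => i /andP [/andP [_ hi] _].
  rewrite subr_gt0 ltr_nat; lia.
have e1 : (\prod_(1 <= i < r) ((k%:R : rat) - i%:R) = Q * (k - r.-1)%:R)%R.
  rewrite {1}r1 big_nat_recr /=; last lia.
  by rewrite natrB //; lia.
have e2 : (\prod_(1 <= i < r) ((k.+1%:R : rat) - i%:R) = k%:R * Q)%R.
  rewrite {1}r1 big_nat_recl /=; last lia.
  congr (_ * _)%R.
    by rewrite -addn1 natrD addrK.
  rewrite /Q; apply: eq_bigr => i _; rewrite -[i.+1]addn1 -[k.+1]addn1 !natrD; ring.
rewrite e1 e2.
have P1 : (0 < (k%:R : rat) ^+ L)%R by rewrite exprn_gt0 // ltr0n; lia.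
have P2 : (0 < (k.+1%:R : rat) ^+ L)%R by rewrite exprn_gt0 // ltr0n.
rewrite ltr_pdivrMr // mulrAC ltr_pdivlMr //.
move=> H.
have K := @keyn r k L hr hk hL.
rewrite expnS ltn_pmul2l in K; last lia.
have : ((k * k ^ L)%:R < ((k - r.-1) * k.+1 ^ L)%:R :> rat)%R by rewrite ltr_nat.
rewrite !natrM !natrX => H2.
have H3 : (k%:R * Q * k%:R ^+ L < Q * (k - r.-1)%:R * k.+1%:R ^+ L)%R.
  have -> : (k%:R * Q * k%:R ^+ L = Q * (k%:R * k%:R ^+ L))%R by ring.
  have -> : (Q * (k - r.-1)%:R * k.+1%:R ^+ L = Q * ((k - r.-1)%:R * k.+1%:R ^+ L))%R by ring.
  by rewrite ltr_pM2l.
by move: (lt_trans H H3); rewrite ltxx.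
Qed.

Lemma Hstep (r m q : nat) : 2 <= r -> r <= m -> m <= (2 * r).-2 -> r.-1 <= q -> q <= m - 2 ->
  Hfun r m q < Hfun r m q.+1.
Proof.
move=> hr hm hm2 hq1 hq2.
rewrite /Hfun /falling.
have r2 : r.-1 = (r.-2).+1 by lia.
rewrite r2 (ffactnS q.+1) (ffactnSr q) /=.
have A : 0 < q ^_ r.-2 by rewrite ffact_gt0; lia.
set a := q ^_ r.-2 in A *.
have h : (m - q) * (q - r.-2) < (m - q.+1) * q.+1 by nia.
have : (m - q) * (q - r.-2) * a < (m - q.+1) * q.+1 * a by rewrite ltn_pmul2r.
nia.
Qed.

Theorem lemma4p4 (r l m : nat) :
  (2 <= r)%N -> (2 * r <= l)%N -> is_m r l m ->
  forall q : nat, (q <= m)%N -> q <> m.-1 -> (Hfun r m q < Hfun r m m.-1)%N.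
Proof.
move=> hr hl hmm.
have hm2 := @m_le r l m hr hl hmm.
have hm : r <= m by case: hmm.
have Hpos : 0 < Hfun r m m.-1.
  rewrite /Hfun /falling muln_gt0 ffact_gt0; apply/andP; split; lia.
move=> q hq hne.
case: (ltnP q r.-1) => hq1.
  by rewrite /Hfun /falling ffact_small // muln0.
case: (eqVneq q m) => [->|hqm].
  by rewrite /Hfun subnn mul0n.
have hq2 : q <= m - 2 by lia.
have gen : forall d, q + d <= m - 2 -> Hfun r m q < Hfun r m (q + d).+1.
  elim=> [|d IH] hd.
    rewrite addn0; apply: Hstep => //; lia.
  apply: (ltn_trans (IH (ltac:(lia)))).
  rewrite -addSnnS addSn; apply: Hstep => //; lia.
have := gen (m - 2 - q) (ltac:(lia)).
by have -> : (q + (m - 2 - q)).+1 = m.-1 by lia.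
Qed.
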